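(* Let $q$ be a prime power, $b,k,t$ positive integers with $b\le k$, and let $wt_b:\mathbb{F}_q^k\to\{0,b,b+1,\ldots,k\}$ be the $b$-symbol weight function. Let $g_1=0$ and $g_i=b+i-2$ for $2\le i\le k-b+2$. Then \[ r_b^{wt_b}(k,t)\le N_b\big(\boldsymbol{B}^{(2)}_{wt_b}(t,g_1,\ldots,g_{k-b+2})\big), \] where $\boldsymbol{B}^{(2)}_{wt_b}(t,g_1,\ldots,g_{k-b+2})$ is the $(k-b+2)\times(k-b+2)$ matrix with entries \[ [\boldsymbol{B}^{(2)}_{wt_b}]_{ij}=\begin{cases}0,& i=j,\\ 2t-\max\{i,j\}+2,& i\ne j\text{ and } (i=1\text{ or } j=1),\\ 2t,& i,j>1\text{ and } 0<|i-j|<b,\\ [2t+b-|i-j|]^+,& i,j>1\text{ and } |i-j|\ge b.\end{cases} \]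
   Context: For $\boldsymbol{z}=(z_0,\ldots,z_{n-1}),\boldsymbol{w}\in\mathbb{F}_q^n$, $d_b(\boldsymbol{z},\boldsymbol{w})$ is the number of $i\in\{0,\ldots,n-1\}$ with $(z_i,\ldots,z_{i+b-1})\ne(w_i,\ldots,w_{i+b-1})$ (indices mod $n$), and $wt_b(\boldsymbol{x})=d_b(\boldsymbol{x},\boldsymbol{0})$. $[x]^+=\max\{x,0\}$. A systematic encoding $\mathrm{Enc}(\boldsymbol{x})=(\boldsymbol{x},p(\boldsymbol{x}))\in\mathbb{F}_q^{k+r}$ is a function-correcting $b$-symbol code for $f$ if $d_b(\mathrm{Enc}(\boldsymbol{x}_1),\mathrm{Enc}(\boldsymbol{x}_2))\ge 2t+1$ whenever $f(\boldsymbol{x}_1)\ne f(\boldsymbol{x}_2)$; $r_b^f(k,t)$ is the smallest $r$ for which one exists. For an $M\times M$ nonnegative integer matrix $\boldsymbol{B}$, $N_b(\boldsymbol{B})$ is the smallest $r$ such that there exist $\boldsymbol{p}_1,\ldots,\boldsymbol{p}_M\in\mathbb{F}_q^r$ (in some ordering) with $d_b(\boldsymbol{p}_i,\boldsymbol{p}_j)\ge[\boldsymbol{B}]_{ij}$ for all $i,j$. *)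

(* Defs.v *)
From mathcomp Require Import ssreflect ssrfun ssrbool eqtype ssrnat seq div fintype tuple ssralg finalg.
Set Implicit Arguments. Unset Strict Implicit. Unset Printing Implicit Defensive.
Import GRing.Theory.

Definition dsym (F : finFieldType) (b : nat) (z w : seq F) : nat :=
  let n := size z in
  count (fun i => has (fun j => nth 0%R z ((i + j) %% n) != nth 0%R w ((i + j) %% n))
                      (iota 0 b))
        (iota 0 n).

Definition wtsym (F : finFieldType) (b : nat) (x : seq F) : nat :=
  dsym b x (nseq (size x) 0%R).

Definition is_FCbSC (F : finFieldType) (b k t r : nat) (R : Type)
    (f : k.-tuple F -> R) (p : k.-tuple F -> r.-tuple F) : Prop :=
  forall x1 x2 : k.-tuple F, f x1 <> f x2 ->
    (2 * t + 1 <= dsym b (val x1 ++ val (p x1)) (val x2 ++ val (p x2)))%N.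

(* r is feasible for the definition of r_b^f(k,t). *)
Definition FCbSC_feasible (F : finFieldType) (b k t r : nat) (R : Type)
    (f : k.-tuple F -> R) : Prop :=
  exists p : k.-tuple F -> r.-tuple F, is_FCbSC b t f p.

(* r is feasible for the definition of N_b(B) for an M x M nat matrix B. *)
Definition Nb_feasible (F : finFieldType) (b M r : nat) (B : 'I_M -> 'I_M -> nat) : Prop :=
  exists P : 'I_M -> r.-tuple F,
    forall i j : 'I_M, (B i j <= dsym b (val (P i)) (val (P j)))%N.

(* The matrix B^(2)_{wt_b}(t, g_1, ..., g_{k-b+2}), 1-indexed entries
   i = i0+1, j = j0+1 for i0, j0 : 'I_(k-b+2). *)
Definition absdiff (i j : nat) : nat := (i - j) + (j - i).

Definition B2wt (k b t : nat) (i0 j0 : 'I_(k - b + 2)) : nat :=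
  let i := (val i0).+1 in
  let j := (val j0).+1 in
  if i == j then 0
  else if (i == 1) || (j == 1) then (2 * t + 2) - maxn i j
  else if absdiff i j < b then 2 * t
  else (2 * t + b) - absdiff i j.

(* Main.v *)
Require Import Defs.
From mathcomp Require Import ssreflect ssrfun ssrbool eqtype ssrnat seq div fintype tuple ssralg finalg.
From mathcomp Require Import zify.

Lemma count_mono (P Q : pred nat) m n :
  (forall i, m <= i < m + n -> P i -> Q i) -> count P (iota m n) <= count Q (iota m n).
Proof.
elim: n m => [|n IH] m H //=.
apply: leq_add; last by apply: IH => i hi; apply: H; lia.
case Pm: (P m) => //=. rewrite H //. lia.
Qed.

Lemma count_shift (P Q : pred nat) k m n :
  (forall i, m <= i < m + n -> P i -> Q (k + i)) ->
  count P (iota m n) <= count Q (iota (k + m) n).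
Proof.
elim: n m => [|n IH] m H //=.
rewrite -addnS.
apply: leq_add; last by apply: IH => i hi; apply: H; lia.
case Pm: (P m) => //=. rewrite H //. lia.
Qed.

Lemma count_or (P Q : pred nat) s :
  count (fun i => P i || Q i) s <= count P s + count Q s.
Proof. elim: s => //= x s IH. case: (P x); case: (Q x) => /=; lia. Qed.

Lemma count_or_disj (P Q : pred nat) s : (forall i, P i -> Q i -> False) ->
  count P s + count Q s <= count (fun i => P i || Q i) s.
Proof.
elim: s => //= x s IH H. have := IH H. have := H x.
case: (P x); case: (Q x) => /= h; first [lia | by exfalso; apply: h].
Qed.

Lemma count_itv lo hi m n :
  count (fun i => (lo <= i) && (i < hi)) (iota m n) = minn hi (m + n) - maxn lo m.
Proof.
elim: n m => [|n IH] m /=; first lia.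
rewrite IH.
have [h1|h1] := leqP lo m; have [h2|h2] := ltnP m hi; rewrite /=; lia.
Qed.

Definition Hit {F : finFieldType} (b n : nat) (z w : seq F) (i : nat) : bool :=
  has (fun j => nth 0%R z ((i + j) %% n) != nth 0%R w ((i + j) %% n)) (iota 0 b).

Lemma dsymE (F : finFieldType) b (z w : seq F) :
  dsym b z w = count (Hit b (size z) z w) (iota 0 (size z)).
Proof. by []. Qed.

Lemma dsym_tri (F : finFieldType) b (z w u v x y : seq F) :
  size u = size z -> size x = size z ->
  (forall m, nth 0%R z m != nth 0%R w m -> (nth 0%R u m != nth 0%R v m) || (nth 0%R x m != nth 0%R y m)) ->
  dsym b z w <= dsym b u v + dsym b x y.
Proof.
move=> hu hx H; rewrite !dsymE hu hx.
apply: leq_trans (count_or _ _ _).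
apply: sub_count => i /hasP [j hj hd].
case/orP: (H _ hd) => hd'; apply/orP; [left|right]; apply/hasP; by exists j.
Qed.

Lemma dsym_ge_b (F : finFieldType) b k (x1 x2 : seq F) a0 :
  0 < b -> b <= k -> size x1 = k -> a0 < k -> nth 0%R x1 a0 != nth 0%R x2 a0 ->
  b <= dsym b x1 x2.
Proof.
move=> hb hbk s1 ha hd; rewrite dsymE s1.
pose P := fun i => (a0 + 1 - b <= i) && (i < a0 + 1).
pose Q := fun i => (k + a0 + 1 - b <= i) && (i < k).
have h1 := count_or_disj P Q (iota 0 k).
have h2 : count (fun i => P i || Q i) (iota 0 k) <= count (Hit b k x1 x2) (iota 0 k).
  apply: count_mono => i hi /orP [/andP [p1 p2]|/andP [p1 p2]]; apply/hasP.
  - exists (a0 - i); first by rewrite mem_iota; lia.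
    have -> : i + (a0 - i) = a0 by lia.
    by rewrite modn_small.
  - exists (k + a0 - i); first by rewrite mem_iota; lia.
    have -> : i + (k + a0 - i) = k + a0 by lia.
    by rewrite modnDl modn_small.
have e1 := count_itv (a0 + 1 - b) (a0 + 1) 0 k.
have e2 := count_itv (k + a0 + 1 - b) k 0 k.
rewrite -/P in e1; rewrite -/Q in e2.
have : forall i, P i -> Q i -> False by move=> i; rewrite /P /Q; lia.
move=> /h1 h3. lia.
Qed.

Lemma concat_bound (F : finFieldType) b k r (x1 x2 p1 p2 : seq F) a0 :
  0 < b -> b <= k -> size x1 = k -> size x2 = k -> size p1 = r -> size p2 = r ->
  a0 < k -> nth 0%R x1 a0 != nth 0%R x2 a0 ->
  (forall m, m < k -> nth 0%R x1 m != nth 0%R x2 m -> a0 <= m) ->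
  dsym b x1 x2 + dsym b p1 p2 <= dsym b (x1 ++ p1) (x2 ++ p2) + (b - 1).
Proof.
move=> hb hbk s1 s2 t1 t2 ha hd hmin.
rewrite !dsymE size_cat s1 t1 iotaD count_cat add0n.
set H := Hit b (k + r) (x1 ++ p1) (x2 ++ p2).
pose NA := fun i => has (fun j => (i + j < k) && (nth 0%R x1 (i + j) != nth 0%R x2 (i + j))) (iota 0 b).
pose NC := fun i => has (fun j => (i + j < r) && (nth 0%R p1 (i + j) != nth 0%R p2 (i + j))) (iota 0 b).
have A1 : count NA (iota 0 k) <= count H (iota 0 k).
  apply: count_mono => i hi /hasP [j hj /andP [hij hdd]]; apply/hasP; exists j => //.
  rewrite modn_small; last lia.
  by rewrite !nth_cat s1 s2 hij.
have A2 : count (Hit b k x1 x2) (iota 0 k) <=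
    count (fun i => NA i || ((k - b + 1 + a0 <= i) && (i < k))) (iota 0 k).
  apply: count_mono => i hi /hasP [j]; rewrite mem_iota => hj hdd.
  case: (ltnP (i + j) k) => hij.
    apply/orP; left; apply/hasP; exists j; first by rewrite mem_iota.
    by rewrite hij -(modn_small hij).
  apply/orP; right.
  have e : (i + j) %% k = i + j - k.
    have -> : i + j = (i + j - k) + k by lia.
    rewrite modnDr modn_small; lia.
  rewrite e in hdd. have := hmin _ _ hdd. lia.
have A3 := count_or NA (fun i => (k - b + 1 + a0 <= i) && (i < k)) (iota 0 k).
have A4 := count_itv (k - b + 1 + a0) k 0 k.
have C1 : count (fun i => NC i || (r + a0 < i + b)) (iota 0 r) <= count H (iota (k + 0) r).
  apply: count_shift => i hi /orP [/hasP [j hj /andP [hij hdd]]|hw]; apply/hasP.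
    exists j => //.
    rewrite -addnA modn_small; last lia.
    rewrite !nth_cat s1 s2 ltnNge leq_addr /=.
    by have -> : k + (i + j) - k = i + j by lia.
  exists (r + a0 - i); first by rewrite mem_iota; lia.
  have -> : k + i + (r + a0 - i) = (k + r) + a0 by lia.
  rewrite modnDl modn_small; last lia.
  by rewrite !nth_cat s1 s2 ha.
have C2 : count (Hit b r p1 p2) (iota 0 r) <=
    count (fun i => (NC i || (r + a0 < i + b)) || ((r + 1 - b <= i) && (i < r + a0 + 1 - b))) (iota 0 r).
  apply: count_mono => i hi /hasP [j]; rewrite mem_iota => hj hdd.
  case: (ltnP (i + j) r) => hij.
    apply/orP; left; apply/orP; left; apply/hasP; exists j; first by rewrite mem_iota.
    by rewrite hij -(modn_small hij).
  case: (ltnP (r + a0) (i + b)) => h; first by rewrite orbT.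
  apply/orP; right. have hj2 : (j < b)%N by case/andP: hj. move: hj2 hij h hi; clear. lia.
have C3 := count_or (fun i => NC i || (r + a0 < i + b)) (fun i => (r + 1 - b <= i) && (i < r + a0 + 1 - b)) (iota 0 r).
have C4 := count_itv (r + 1 - b) (r + a0 + 1 - b) 0 r.
rewrite addn0 in C1.

lia.
Qed.

Definition idxv (b w : nat) : nat := if w == 0 then 0 else w - b + 1.

Definition Bf (b t i j : nat) : nat :=
  if i == j then 0
  else if (i == 1) || (j == 1) then (2 * t + 2) - maxn i j
  else if absdiff i j < b then 2 * t
  else (2 * t + b) - absdiff i j.

Lemma arith b t w1 w2 dA dC D : 0 < b -> w1 <> w2 -> (w1 = 0 \/ b <= w1) -> (w2 = 0 \/ b <= w2) ->
  w1 <= dA + w2 -> w2 <= dA + w1 -> b <= dA -> dA + dC <= D + (b - 1) ->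
  Bf b t (idxv b w1).+1 (idxv b w2).+1 <= dC -> 2 * t + 1 <= D.
Proof.
move=> hb hne h1 h2 t1 t2 g c; rewrite /Bf /idxv /absdiff.
case: (eqVneq w1 0) => e1; case: (eqVneq w2 0) => e2.
all: do ![case: ifP => ?]; lia.
Qed.

Lemma wt_bounds (F : finFieldType) b k (x : seq F) : 0 < b -> b <= k -> size x = k ->
  wtsym b x <= k /\ (wtsym b x = 0 \/ b <= wtsym b x).
Proof.
move=> hb hbk sx; split.
  rewrite /wtsym dsymE -sx; apply: leq_trans (count_size _ _) _; by rewrite size_iota.
case: (posnP (wtsym b x)) => h; [by left | right].
move: h; rewrite /wtsym dsymE -has_count => /hasP [i _ /hasP [j _ hd]].
apply: (@dsym_ge_b F b k x _ _ hb hbk sx _ hd).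
rewrite -sx ltn_mod sx; lia.
Qed.

Theorem lemma6p1 (F : finFieldType) (b k t : nat) :
  (0 < b)%N -> (b <= k)%N -> (0 < t)%N ->
  forall r : nat, @Nb_feasible F b (k - b + 2) r (@B2wt k b t) ->
  exists2 r' : nat, (r' <= r)%N &
    @FCbSC_feasible F b k t r' nat (fun x : k.-tuple F => @wtsym F b (val x)).
Proof.
move=> hb hbk ht r [P HP].
exists r => //.
have wb : forall x : k.-tuple F, wtsym b (val x) <= k /\
    (wtsym b (val x) = 0 \/ b <= wtsym b (val x)).
  by move=> x; apply: wt_bounds => //; rewrite size_tuple.
have wle : forall x : k.-tuple F, idxv b (wtsym b (val x)) < k - b + 2.
  move=> x; have [h1 h2] := wb x; rewrite /idxv; case: eqP => _; lia.
exists (fun x => P (Ordinal (wle x))) => x1 x2 hne.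
have HB := HP (Ordinal (wle x1)) (Ordinal (wle x2)).
have hh : has (fun m => nth 0%R (val x1) m != nth 0%R (val x2) m) (iota 0 k).
  apply/negPn/negP => /hasPn H0; apply: hne; congr wtsym.
  apply: (@eq_from_nth _ 0%R); rewrite ?size_tuple // => m hm.
  apply/eqP; have := H0 m; rewrite negbK; apply; rewrite mem_iota; lia.
have ex : exists m, (m < k) && (nth 0%R (val x1) m != nth 0%R (val x2) m).
  move/hasP: hh => [m]; rewrite mem_iota => hm hd; exists m; rewrite hd andbT; lia.
case: (ex_minnP ex) => a0 /andP [ha hd] hmin.
have s1 : size (val x1) = k by rewrite size_tuple.
have s2 : size (val x2) = k by rewrite size_tuple.
have T1 := @dsym_tri F b (val x1) (nseq (size (val x1)) 0%R) (val x1) (val x2) (val x2) (nseq (size (val x2)) 0%R).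
have T2 := @dsym_tri F b (val x2) (nseq (size (val x2)) 0%R) (val x1) (val x2) (val x1) (nseq (size (val x1)) 0%R).
have G := @dsym_ge_b F b k (val x1) (val x2) a0 hb hbk s1 ha hd.
have CB := @concat_bound F b k r (val x1) (val x2) (val (P (Ordinal (wle x1)))) (val (P (Ordinal (wle x2)))) a0
   hb hbk s1 s2 (size_tuple _) (size_tuple _) ha hd (fun m hm hdm => hmin m (introT andP (conj hm hdm))).
have [_ W1] := wb x1. have [_ W2] := wb x2.
apply: (@arith b t (wtsym b (val x1)) (wtsym b (val x2)) (dsym b (val x1) (val x2))
   (dsym b (val (P (Ordinal (wle x1)))) (val (P (Ordinal (wle x2))))) _ hb hne W1 W2 _ _ G CB HB).
- rewrite /wtsym; apply: T1; rewrite ?s1 ?s2 // => m.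
  rewrite !nth_nseq ?s1 ?s2.
  case: (eqVneq (nth 0%R (val x1) m) (nth 0%R (val x2) m)) => [->|] //=.
- rewrite /wtsym; apply: T2; rewrite ?s1 ?s2 // => m.
  rewrite !nth_nseq ?s1 ?s2.
  case: (eqVneq (nth 0%R (val x1) m) (nth 0%R (val x2) m)) => [->|] //=.
Qed.
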